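(* There exist two winners with endowments $w_1>w_2>0$, queue scores $r_1>r_2$, and a budget $B\in(w_1-w_2,w_1]$ such that the queue rule violates monotonicity, namely $s'_1<s'_2$, where $s'_i=w_i-x_i$ is the post-ADL surviving endowment and $x_i$ the amount seized.
   Context: Winners have haircutable endowments $w_i>0$ and ranking scores $r_i$. The queue rule with budget $B$ works as follows: - It processes winners in decreasing order of score. - Each processed winner $j$ has $x_j=\min\{w_j,\text{remaining budget}\}$ seized. - The seized amount is subtracted from the remaining budget, which starts at $B$. *)

(* Defs.v *)
From mathcomp Require Import all_boot all_order all_algebra.
Set Implicit Arguments. Unset Strict Implicit. Unset Printing Implicit Defensive.
Import Order.TTheory GRing.Theory Num.Theory.
Local Open Scope ring_scope.

Section Queue.
Variables (R : realFieldType) (I : finType).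

(* Processing order: winners sorted by decreasing score (stable sort;
   ties are broken by the enumeration order of I). *)
Definition queue_order (r : I -> R) : seq I :=
  sort (fun i j => r j <= r i) (enum I).

Fixpoint queue_seize (w : I -> R) (b : R) (s : seq I) : I -> R :=
  match s with
  | [::] => fun _ => 0
  | j :: s' =>
      let x := Num.min (w j) b in
      fun i => if i == j then x else queue_seize w (b - x) s' i
  end.

Definition queue_rule (w r : I -> R) (B : R) (i : I) : R :=
  queue_seize w B (queue_order r) i.

Definition queue_survivor (w r : I -> R) (B : R) (i : I) : R :=
  w i - queue_rule w r B i.

End Queue.

(* Main.v *)
Require Import Defs.
From mathcomp Require Import all_boot all_order all_algebra.
Import Order.TTheory GRing.Theory Num.Theory.
Local Open Scope ring_scope.

Theorem mainTheorem7 (R : realFieldType) :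
  exists (w r : 'I_2 -> R) (B : R),
    0 < w ord_max /\ w ord_max < w ord0 /\
    r ord_max < r ord0 /\
    w ord0 - w ord_max < B /\ B <= w ord0 /\
    queue_survivor w r B ord0 < queue_survivor w r B ord_max.
Proof.
pose w := fun i : 'I_2 => if i == ord0 then (2:R) else 1.
pose r := fun i : 'I_2 => if i == ord0 then (1:R) else 0.
exists w, r, 2.
have hq : queue_order r = [:: ord0; ord_max].
  rewrite /queue_order; have -> : enum 'I_2 = [:: ord0; ord_max].
    by apply: (inj_map val_inj); rewrite val_enum_ord.
  rewrite /=.
  rewrite sorted_sort //=; last by rewrite ler01.
  by move=> a b c h1 h2; exact: le_trans h2 h1.
rewrite /queue_survivor /queue_rule hq /= /w /=.
rewrite !minxx.
split; first by rewrite ltr01.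
split; first by rewrite ltr1n.
split; first by rewrite /r /= ltr01.
split; first by rewrite addrK ltr1n.
split; first by [].
rewrite subrr.
by rewrite (@min_r _ _ 1 0) ?ler01 // subr0 ltr01.
Qed.
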